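(* Let $p$ be a positive integer, let $\lambda$ be a partition all of whose parts are multiples of $p$, and let $\lambda^c$ be the conjugate partition of $\lambda$. Then every maximal run of consecutive integers contained in the set $\beta(\lambda^c)$ has length divisible by $p$.
   Context: For a partition $\mu$, its $\beta$-set $\beta(\mu)$ is the set of hook lengths of the boxes in the first column of the Young diagram of $\mu$, where the hook length of a box is the number of boxes consisting of the box itself, the boxes directly to its right, and the boxes directly below it. Equivalently, if $\mu=(\mu_1,\dots,\mu_m)$ with $\mu_m>0$, then $\beta(\mu)=\{\mu_i+m-i : 1\le i\le m\}$. A maximal run of consecutive integers in a set $S\subseteq\mathbb{Z}$ is a set $\{a,a+1,\dots,b\}\subseteq S$ with $a-1\notin S$ and $b+1\notin S$; its length is $b-a+1$. *)

(* Defs.v *)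
From mathcomp Require Import all_boot.
Set Implicit Arguments. Unset Strict Implicit. Unset Printing Implicit Defensive.

Definition is_partition (mu : seq nat) : bool :=
  sorted geq mu && all (fun x => 0 < x) mu.

Definition conj_part (mu : seq nat) : seq nat :=
  [seq count (fun x => j < x) mu | j <- iota 0 (head 0 mu)].

(* beta-set: with mu = (mu_1,...,mu_m), mu_m > 0, the set
   { mu_i + m - i : 1 <= i <= m }; with 0-indexed i this is mu`_i + (m-1-i). *)
Definition beta_set (mu : seq nat) : seq nat :=
  [seq nth 0 mu i + (size mu - i.+1) | i <- iota 0 (size mu)].

(* {a,...,b} is a maximal run of consecutive integers in S (S a set of
   naturals, so a-1 \notin S is automatic when a = 0). *)
Definition maximal_run (S : pred nat) (a b : nat) : Prop :=
  a <= b /\ (forall k, a <= k <= b -> S k) /\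
  (0 < a -> ~~ S a.-1) /\ ~~ S b.+1.

(* Main.v *)
Require Import Defs.
From mathcomp Require Import all_boot.
From mathcomp Require Import zify.

Section Abs.
Variables (p m : nat) (g : nat -> nat) (S : pred nat).
Hypotheses (p0 : 0 < p) (pm : p %| m)
  (gmono : forall i j, i <= j -> g j <= g i)
  (gblk : forall k r, r < p -> g (k*p + r) = g (k*p))
  (HS : forall x, S x <-> exists2 i, i < m & x = g i + (m - i.+1)).

Let f i := g i + (m - i.+1).
Let B y := exists2 k, k*p < m & y = f (k*p + p.-1).

Lemma kbound k : k*p < m -> k*p + p <= m.
Proof. case/dvdnP: pm => q ->. move=> h. have : k < q by rewrite ltn_pmul2r in h. nia. Qed.

Lemma F1 y t : B y -> t < p -> S (y + t).
Proof.
case=> k hk -> ht; apply/HS; exists (k*p + (p.-1 - t)).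
  have := kbound _ hk; lia.
rewrite /f !gblk; try lia. have := kbound _ hk; lia.
Qed.

Lemma F2 x : S x -> exists y, [/\ B y, y <= x & x < y + p].
Proof.
case/HS=> i hi ->. exists (f ((i %/ p) * p + p.-1)).
have hi' : i = (i %/ p) * p + i %% p by rewrite -divn_eq.
have hr : i %% p < p by rewrite ltn_mod.
move: hi' hr hi; move: (i %/ p) (i %% p) => k r -> hr hi.
have hk : k * p < m by lia.
have := kbound _ hk => hk2.
have e1 : g (k*p + p.-1) = g (k*p) by rewrite gblk //; lia.
have e2 : g (k*p + r) = g (k*p) by rewrite gblk.
split; first by exists k.
- rewrite /f e1 e2. lia.
- rewrite /f e1 e2. lia.
Qed.

Lemma F3l k k' : k < k' -> k' * p < m -> f (k'*p + p.-1) + p <= f (k*p + p.-1).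
Proof.
move=> hkk hk'. have := kbound _ hk' => h2.
have h3 : k*p + p <= k'*p by nia.
rewrite /f gblk; last lia. rewrite (gblk k); last lia.
have := gmono (k*p) (k'*p). lia.
Qed.

Lemma F3 y y' z : B y -> B y' -> y <= z < y + p -> y' <= z < y' + p -> y = y'.
Proof.
case=> k hk -> [k' hk' ->] h1 h2.
case: (ltngtP k k') => [lt|lt|->] //.
- have := F3l _ _ lt hk'; lia.
- have := F3l _ _ lt hk; lia.
Qed.

Lemma runs a b : maximal_run S a b -> p %| (b - a + 1).
Proof.
case=> hab [hin [ha hb]].
have Ba : B a.
  have [y [By ya ay]] := F2 _ (hin a ltac:(lia)).
  case: (ltngtP y a) => [lt|lt|eq]; [|lia|by rewrite -eq].
  have := F1 _ (a.-1 - y) By ltac:(lia). rewrite (_ : y + _ = a.-1); last lia.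
  move=> Sa. by move: (ha ltac:(lia)); rewrite Sa.
move: {2}(b - a) (leqnn (b - a)) => n. clear ha; elim: n a hab hin Ba => [|n IH] a hab hin Ba hn.
- have := F1 _ (b - a + 1) Ba. case: (ltnP (b - a + 1) p) => h.
    move=> /(_ isT). rewrite (_ : a + _ = b.+1); last lia. by rewrite (negbTE hb).
  move=> _. have -> : b - a + 1 = 1 by lia. have : p <= 1 by lia. by case: p p0 => [|[]].
- case: (ltnP b (a + p.-1)) => h1.
    have := F1 _ (b.+1 - a) Ba ltac:(lia). rewrite (_ : a + _ = b.+1); last lia.
    by rewrite (negbTE hb).
  case: (ltnP b (a + p)) => h2.
    by have -> : b - a + 1 = p by lia.
  have [y [By ya ay]] := F2 _ (hin (a + p) ltac:(lia)).
  have ey : y = a + p.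
    case: (ltngtP y (a + p)) => [lt|lt|//]; last lia.
    have := F3 _ _ (a + p.-1) Ba By ltac:(lia) ltac:(lia). lia.
  subst y.
  have := IH (a + p) ltac:(lia) ltac:(move=> k hk; apply: hin; lia) By ltac:(lia).
  have -> : b - a + 1 = (b - (a + p) + 1) + p by lia.
  by move=> h; rewrite dvdn_addl.
Qed.
End Abs.

Theorem lemma3p3 (p : nat) (lambda : seq nat) :
  0 < p -> is_partition lambda -> all (fun x => p %| x) lambda ->
  forall a b : nat,
    maximal_run (fun k => k \in beta_set (conj_part lambda)) a b ->
    p %| (b - a + 1).
Proof.
move=> p0 _ hall a b hrun.
apply: (@runs p (head 0 lambda) (fun j => count (fun x => j < x) lambda) _
   p0 _ _ _ _ a b hrun).
- by case: (lambda) hall => [|x s] //= /andP[].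
- move=> i j hij; apply: sub_count => x /=; lia.
- move=> k r hr; apply: eq_in_count => x /= /(allP hall) /dvdnP [t ->].
  apply/idP/idP => h; first lia.
  have : k < t by rewrite -(ltn_pmul2r p0); lia.
  nia.
- move=> x; rewrite /beta_set /conj_part size_map size_iota; split.
  + case/mapP=> i; rewrite mem_iota => /andP[_ hi] ->; exists i => //=.
    by rewrite (nth_map 0) ?size_iota // nth_iota.
  + case=> i hi ->; apply/mapP; exists i; first by rewrite mem_iota.
    by rewrite (nth_map 0) ?size_iota // nth_iota.
Qed.
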